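(* Let $n\ge3$, let $0<r<r_n$, let $v$ be a vertex of $P_n$ and let $p\in P_n$ be arbitrary. Then $d_{P_n}(v,g_r(v))\le d_{P_n}(p,g_r(p))$.
   Context: $P_n$ is the boundary of the regular polygon in $\mathbb{R}^2$ whose vertices are the $n$-th roots of unity (its vertices), with the Euclidean metric $\|x-y\|$. $d_{P_n}(x,y)\in[0,1)$ is the counterclockwise arc length of $P_n$ from $x$ to $y$ divided by the perimeter. The directed Vietoris–Rips graph $\mathrm{VR}_<(P_n;r)$ has vertex set $P_n$ and, for distinct $u,w$ with $\|u-w\|<r$, the edge $u\to w$ if $d_{P_n}(u,w)<d_{P_n}(w,u)$, else $w\to u$; it is cyclic if whenever $u_0\to u_1$, every $w$ strictly counterclockwise-between $u_0,u_1$ has $u_0\to w$ and $w\to u_1$. $r_n=\sup\{r\ge0:\mathrm{VR}_<(P_n;r')\text{ is cyclic for all }0<r'<r\}$. For $0<r<r_n$ and $p\in P_n$, $g_r(p)$ is the first point $w$ met when moving counterclockwise from $p$ along $P_n$ with $\|p-w\|=r$. *)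

(* Defs.v *)
From Stdlib Require Import Reals.
From Coquelicot Require Import Coquelicot.
Open Scope R_scope.

Definition frac (x : R) : R := x - IZR (Int_part x).

Definition omega (n : nat) (k : Z) : R * R :=
  (cos (2 * PI * IZR k / INR n), sin (2 * PI * IZR k / INR n)).

(* Arc-length parametrization of P_n by t in [0,1): gamma n t is the point at
   (normalized) counterclockwise arc length t from the vertex omega_0 = 1.
   Since all edges have equal length, on edge k (n t in [k,k+1)) the point is
   the affine combination (1-s) omega_k + s omega_(k+1), s = n t - k. *)
Definition gamma (n : nat) (t : R) : R * R :=
  let k := Int_part (INR n * t) in
  let s := INR n * t - IZR k in
  let a := omega n k in
  let b := omega n (k + 1)%Z in
  ((1 - s) * fst a + s * fst b, (1 - s) * snd a + s * snd b).

(* Parameter domain: the points of P_n correspond bijectively to t in [0,1). *)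
Definition in_P (t : R) : Prop := 0 <= t < 1.

Definition eucl (x y : R * R) : R :=
  sqrt ((fst x - fst y) ^ 2 + (snd x - snd y) ^ 2).

Definition pdist (n : nat) (t u : R) : R := eucl (gamma n t) (gamma n u).

(* d_{P_n}(x,y): counterclockwise arc length from x to y divided by the
   perimeter, in [0,1). *)
Definition dP (t u : R) : R := frac (u - t).

(* Directed edge u -> w of VR_<(P_n; r).  For the distinct pair {u,w} with
   ||u-w|| < r: u -> w if d(u,w) < d(w,u), else w -> u.  Applying the rule to
   both orderings, u -> w holds exactly when d(u,w) <= d(w,u). *)
Definition arrow (n : nat) (r : R) (u w : R) : Prop :=
  u <> w /\ pdist n u w < r /\ dP u w <= dP w u.

Definition strictly_between (u0 w u1 : R) : Prop :=
  w <> u0 /\ w <> u1 /\ dP u0 w < dP u0 u1.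

Definition cyclic (n : nat) (r : R) : Prop :=
  forall u0 u1, in_P u0 -> in_P u1 -> arrow n r u0 u1 ->
  forall w, in_P w -> strictly_between u0 w u1 ->
    arrow n r u0 w /\ arrow n r w u1.

Definition r_crit (n : nat) : Rbar :=
  Lub_Rbar (fun r => 0 <= r /\ forall r', 0 < r' < r -> cyclic n r').

(* is_g n r p w : w (a point of P_n) is g_r(p), the first point met moving
   counterclockwise from p with ||p - w|| = r. *)
Definition is_g (n : nat) (r : R) (p w : R) : Prop :=
  in_P w /\ pdist n p w = r /\
  forall w', in_P w' -> pdist n p w' = r -> dP p w <= dP p w'.

(* Main.v *)
Require Import Defs.
From Stdlib Require Import Reals Lra Lia Psatz ZArith.
From Coquelicot Require Import Coquelicot.
Open Scope R_scope.

Definition Gc (c : Z -> R) (x : R) : R :=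
  (1 - (x - IZR (Int_part x))) * c (Int_part x) +
  (x - IZR (Int_part x)) * c (Int_part x + 1)%Z.
Definition cx (n:nat) (k:Z) : R := cos (2 * PI * IZR k / INR n).
Definition sy (n:nat) (k:Z) : R := sin (2 * PI * IZR k / INR n).
Definition Pt (n:nat) (x:R) : R*R := (Gc (cx n) x, Gc (sy n) x).
Definition D2 (a b : R*R) : R := (fst a - fst b)^2 + (snd a - snd b)^2.

Lemma gamma_Pt n t : gamma n t = Pt n (INR n * t).
Proof. reflexivity. Qed.

Lemma pdist_D2 n t u : pdist n t u = sqrt (D2 (Pt n (INR n * t)) (Pt n (INR n * u))).
Proof. reflexivity. Qed.

Lemma Int_part_eq x k : IZR k <= x < IZR k + 1 -> Int_part x = k.
Proof.
  intros [H1 H2]. unfold Int_part.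
  assert (up x = (k+1)%Z) as ->. { symmetry. apply tech_up; rewrite plus_IZR; lra. }
  ring.
Qed.

Lemma Int_part_bnd x : IZR (Int_part x) <= x < IZR (Int_part x) + 1.
Proof. destruct (base_Int_part x). lra. Qed.

Lemma Gc_at c m s : 0 <= s <= 1 -> Gc c (IZR m + s) = (1 - s) * c m + s * c (m+1)%Z.
Proof.
  intros Hs. destruct (Req_dec s 1) as [->|Hs1].
  - unfold Gc. replace (IZR m + 1) with (IZR (m+1)) by (rewrite plus_IZR; ring).
    rewrite (Int_part_eq (IZR (m+1)) (m+1)) by lra. ring.
  - unfold Gc. rewrite (Int_part_eq (IZR m + s) m) by lra. ring.
Qed.

Lemma Gc_form c x i : Int_part x = i ->
  Gc c x = (1 - (x - IZR i)) * c i + (x - IZR i) * c (i+1)%Z.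
Proof. intros <-. reflexivity. Qed.

Lemma Gc_shift1 c x : Gc c (x + 1) = Gc (fun k => c (k+1)%Z) x.
Proof.
  unfold Gc. rewrite (Int_part_eq (x+1) (Int_part x + 1)).
  2:{ rewrite plus_IZR; pose proof (Int_part_bnd x); lra. }
  rewrite plus_IZR.
  replace (x + 1 - (IZR (Int_part x) + 1)) with (x - IZR (Int_part x)) by ring.
  reflexivity.
Qed.

Lemma Gc_per c x N : (forall k, c (k + N)%Z = c k) -> Gc c (x + IZR N) = Gc c x.
Proof.
  intros H. unfold Gc. rewrite (Int_part_eq (x+IZR N) (Int_part x + N)).
  2:{ rewrite plus_IZR; pose proof (Int_part_bnd x); lra. }
  rewrite plus_IZR.
  replace (Int_part x + N + 1)%Z with ((Int_part x + 1) + N)%Z by ring.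
  rewrite !H.
  replace (x + IZR N - (IZR (Int_part x) + IZR N)) with (x - IZR (Int_part x)) by ring.
  reflexivity.
Qed.

Lemma Gc_neg c e x : (forall k, c (-k)%Z = e * c k) -> Gc c (-x) = e * Gc c x.
Proof.
  intros H. pose proof (Int_part_bnd x) as Hb.
  destruct (Req_dec x (IZR (Int_part x))) as [Heq|Hne].
  - unfold Gc. rewrite (Int_part_eq (-x) (- Int_part x)).
    2:{ rewrite opp_IZR; lra. }
    rewrite H, opp_IZR.
    replace (- x - - IZR (Int_part x)) with 0 by lra.
    replace (x - IZR (Int_part x)) with 0 by lra. ring.
  - unfold Gc. rewrite (Int_part_eq (-x) (- Int_part x - 1)).
    2:{ rewrite minus_IZR, opp_IZR; lra. }
    replace (- Int_part x - 1 + 1)%Z with (- Int_part x)%Z by ring.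
    replace (- Int_part x - 1)%Z with (- (Int_part x + 1))%Z by ring.
    rewrite !H, opp_IZR, plus_IZR. ring.
Qed.

Section N.
Variable n : nat.
Hypothesis Hn : 0 < INR n.

Let C := cos (2 * PI / INR n).
Let S := sin (2 * PI / INR n).

Lemma ang_succ k : 2 * PI * IZR (k+1) / INR n = 2 * PI * IZR k / INR n + 2 * PI / INR n.
Proof. rewrite plus_IZR. field. lra. Qed.

Lemma cx_rot k : cx n (k+1) = cx n k * C - sy n k * S.
Proof. unfold cx, sy, C, S. rewrite ang_succ, cos_plus. ring. Qed.
Lemma sy_rot k : sy n (k+1) = sy n k * C + cx n k * S.
Proof. unfold cx, sy, C, S. rewrite ang_succ, sin_plus. ring. Qed.

Lemma CS1 : C*C + S*S = 1.
Proof. unfold C, S. pose proof (sin2_cos2 (2 * PI / INR n)). unfold Rsqr in *. lra. Qed.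

Lemma Gcx_shift x : Gc (cx n) (x+1) = C * Gc (cx n) x - S * Gc (sy n) x.
Proof. rewrite Gc_shift1. unfold Gc. cbv beta. repeat (first [rewrite cx_rot | rewrite sy_rot]). ring. Qed.
Lemma Gsy_shift x : Gc (sy n) (x+1) = S * Gc (cx n) x + C * Gc (sy n) x.
Proof. rewrite Gc_shift1. unfold Gc. cbv beta. repeat (first [rewrite cx_rot | rewrite sy_rot]). ring. Qed.

Lemma D2_shift1 x y : D2 (Pt n (x+1)) (Pt n (y+1)) = D2 (Pt n x) (Pt n y).
Proof.
  unfold D2, Pt; simpl. rewrite !Gcx_shift, !Gsy_shift.
  set (a := Gc (cx n) x). set (b := Gc (sy n) x).
  set (c := Gc (cx n) y). set (d := Gc (sy n) y).
  pose proof CS1.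
  transitivity ((C*C+S*S) * ((a-c)^2 + (b-d)^2)); [ring|].
  rewrite H. ring.
Qed.

Lemma D2_shift_nat m x y : D2 (Pt n (x + INR m)) (Pt n (y + INR m)) = D2 (Pt n x) (Pt n y).
Proof.
  induction m.
  - simpl. rewrite !Rplus_0_r. reflexivity.
  - rewrite S_INR. replace (x + (INR m + 1)) with ((x + INR m) + 1) by ring.
    replace (y + (INR m + 1)) with ((y + INR m) + 1) by ring.
    rewrite D2_shift1. exact IHm.
Qed.

Lemma D2_shift m x y : (0 <= m)%Z -> D2 (Pt n (x + IZR m)) (Pt n (y + IZR m)) = D2 (Pt n x) (Pt n y).
Proof.
  intros Hm. rewrite <- (Z2Nat.id m Hm), <- INR_IZR_INZ. apply D2_shift_nat.
Qed.

Lemma cx_neg k : cx n (-k) = 1 * cx n k.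
Proof. unfold cx. rewrite opp_IZR. replace (2 * PI * - IZR k / INR n) with (- (2 * PI * IZR k / INR n)) by (field; lra). rewrite cos_neg. ring. Qed.
Lemma sy_neg k : sy n (-k) = -1 * sy n k.
Proof. unfold sy. rewrite opp_IZR. replace (2 * PI * - IZR k / INR n) with (- (2 * PI * IZR k / INR n)) by (field; lra). rewrite sin_neg. ring. Qed.

Lemma D2_neg x y : D2 (Pt n (-x)) (Pt n (-y)) = D2 (Pt n x) (Pt n y).
Proof.
  unfold D2, Pt; simpl. rewrite !(Gc_neg (cx n) 1) by apply cx_neg.
  rewrite !(Gc_neg (sy n) (-1)) by apply sy_neg. ring.
Qed.

Lemma D2_sym a b : D2 a b = D2 b a.
Proof. unfold D2. ring. Qed.

Lemma cx_per k : cx n (k + Z.of_nat n) = cx n k.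
Proof. unfold cx. rewrite plus_IZR, <- INR_IZR_INZ.
  replace (2 * PI * (IZR k + INR n) / INR n) with (2 * PI * IZR k / INR n + 2 * PI) by (field; lra).
  rewrite cos_plus, cos_2PI, sin_2PI. ring. Qed.
Lemma sy_per k : sy n (k + Z.of_nat n) = sy n k.
Proof. unfold sy. rewrite plus_IZR, <- INR_IZR_INZ.
  replace (2 * PI * (IZR k + INR n) / INR n) with (2 * PI * IZR k / INR n + 2 * PI) by (field; lra).
  rewrite sin_plus, cos_2PI, sin_2PI. ring. Qed.

Lemma Pt_per x : Pt n (x + INR n) = Pt n x.
Proof. unfold Pt. rewrite INR_IZR_INZ, !Gc_per; auto using cx_per, sy_per. Qed.

Definition chord0 l := D2 (Pt n 0) (Pt n l).

Lemma F1 m l : (0 <= m)%Z -> D2 (Pt n (IZR m)) (Pt n (IZR m + l)) = chord0 l.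
Proof. intros Hm. unfold chord0. rewrite <- (D2_shift m 0 l Hm). rewrite Rplus_0_l.
  replace (IZR m + l) with (l + IZR m) by ring. reflexivity. Qed.

Lemma F2 m l : (0 <= m)%Z -> D2 (Pt n (IZR m - l)) (Pt n (IZR m)) = chord0 l.
Proof. intros Hm. unfold chord0.
  replace (IZR m - l) with (-l + IZR m) by ring.
  replace (IZR m) with (0 + IZR m) at 2 by ring.
  rewrite D2_shift by exact Hm. rewrite <- (D2_neg (-l) 0), Ropp_involutive, Ropp_0. apply D2_sym. Qed.

End N.

Lemma Gc_cont c : continuity (Gc c).
Proof.
  intros x0. unfold continuity_pt, continue_in, limit1_in, limit_in.
  intros eps Heps. simpl. unfold R_dist.
  set (K := Int_part x0). pose proof (Int_part_bnd x0) as Hb. fold K in Hb.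
  set (A := c (K+1)%Z - c K). set (B := c K - c (K-1)%Z).
  set (M := Rabs A + Rabs B + 1).
  assert (HM : 0 < M) by (unfold M; pose proof (Rabs_pos A); pose proof (Rabs_pos B); lra).
  exists (Rmin (Rmin 1 (IZR K + 1 - x0)) (eps / M)). split.
  { apply Rmin_pos; [apply Rmin_pos; lra|]. apply Rdiv_lt_0_compat; lra. }
  intros x [_ Hx].
  assert (H1 : Rabs (x - x0) < 1) by (eapply Rlt_le_trans; [exact Hx|]; eapply Rle_trans; [apply Rmin_l|apply Rmin_l]).
  assert (H2 : Rabs (x - x0) < IZR K + 1 - x0) by (eapply Rlt_le_trans; [exact Hx|]; eapply Rle_trans; [apply Rmin_l|apply Rmin_r]).
  assert (H3 : Rabs (x - x0) < eps / M) by (eapply Rlt_le_trans; [exact Hx|]; apply Rmin_r).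
  assert (H3' : Rabs (x - x0) * M < eps).
  { apply (Rmult_lt_compat_r M) in H3; [|lra]. unfold Rdiv in H3. rewrite Rmult_assoc, Rinv_l in H3; lra. }
  pose proof (Rabs_pos (x - x0)) as Hp.
  pose proof (Rabs_pos A). pose proof (Rabs_pos B).
  destruct (Rle_or_lt (IZR K) x) as [Hxk|Hxk].
  - assert (Hxk2 : x < IZR K + 1).
    { destruct (Rcase_abs (x - x0)); [rewrite Rabs_left in H2 by lra | rewrite Rabs_right in H2 by lra]; lra. }
    rewrite (Gc_form c x K) by (apply Int_part_eq; lra).
    rewrite (Gc_form c x0 K) by reflexivity.
    replace ((1 - (x - IZR K)) * c K + (x - IZR K) * c (K + 1)%Z -
      ((1 - (x0 - IZR K)) * c K + (x0 - IZR K) * c (K + 1)%Z)) with ((x - x0) * A) by (unfold A; ring).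
    rewrite Rabs_mult. unfold M in H3'. nra.
  - assert (Hxk2 : IZR K - 1 <= x).
    { destruct (Rcase_abs (x - x0)); [rewrite Rabs_left in H1 by lra | rewrite Rabs_right in H1 by lra]; lra. }
    assert (Hxx : x < x0) by lra.
    rewrite Rabs_left in H3' by lra.
    rewrite (Gc_form c x (K-1)) by (apply Int_part_eq; rewrite minus_IZR; lra).
    rewrite (Gc_form c x0 K) by reflexivity.
    replace (K - 1 + 1)%Z with K by ring.
    replace ((1 - (x - IZR (K - 1))) * c (K - 1)%Z + (x - IZR (K - 1)) * c K -
      ((1 - (x0 - IZR K)) * c K + (x0 - IZR K) * c (K + 1)%Z)) with
      ((x - IZR K) * B + - ((x0 - IZR K) * A)) by (unfold A, B; rewrite minus_IZR; ring).
    eapply Rle_lt_trans; [apply Rabs_triang|].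
    rewrite Rabs_Ropp, !Rabs_mult.
    rewrite (Rabs_left1 (x - IZR K)) by lra.
    rewrite (Rabs_pos_eq (x0 - IZR K)) by lra.
    unfold M in H3'. nra.
Qed.

Lemma conv (l X0 Y0 X1 Y1 R2 : R) : 0 <= l <= 1 -> X0^2 + Y0^2 < R2 -> X1^2+Y1^2 < R2 ->
  ((1-l)*X0 + l*X1)^2 + ((1-l)*Y0 + l*Y1)^2 < R2.
Proof.
  intros Hl H0 H1.
  assert (Hq : 0 <= l*(1-l)) by (apply Rmult_le_pos; lra).
  assert (((1-l)*X0^2 + l*X1^2) - ((1-l)*X0 + l*X1)^2 = l*(1-l)*(X0-X1)^2) by ring.
  assert (((1-l)*Y0^2 + l*Y1^2) - ((1-l)*Y0 + l*Y1)^2 = l*(1-l)*(Y0-Y1)^2) by ring.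
  assert (0 <= l*(1-l)*(X0-X1)^2) by (apply Rmult_le_pos; [lra| apply pow2_ge_0]).
  assert (0 <= l*(1-l)*(Y0-Y1)^2) by (apply Rmult_le_pos; [lra| apply pow2_ge_0]).
  assert ((1-l)*(X0^2+Y0^2) + l*(X1^2+Y1^2) < R2).
  { destruct (Req_dec l 0) as [->|Hl0]; [lra|].
    assert ((1-l)*(X0^2+Y0^2) <= (1-l)*R2) by (apply Rmult_le_compat_l; lra).
    assert (l*(X1^2+Y1^2) < l*R2) by (apply Rmult_lt_compat_l; lra).
    lra. }
  lra.
Qed.

Lemma Gc_cont_lin c a : continuity (fun l => Gc c (a * l)).
Proof.
  intros x. apply (continuity_pt_comp (fun l => a * l) (Gc c)).
  - apply (continuity_pt_scal id a). apply derivable_continuous_pt, derivable_pt_id.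
  - apply Gc_cont.
Qed.

Lemma phi_cont n r : continuity (fun l =>
   (fst (Pt n 0) - Gc (cx n) (INR n * l)) * (fst (Pt n 0) - Gc (cx n) (INR n * l)) +
   (snd (Pt n 0) - Gc (sy n) (INR n * l)) * (snd (Pt n 0) - Gc (sy n) (INR n * l)) - r * r).
Proof.
  intros x.
  assert (HA : forall a c, continuity_pt (fun l => a - Gc c (INR n * l)) x).
  { intros a c. apply (continuity_pt_minus (fun _ => a) (fun l => Gc c (INR n * l))).
    - apply continuity_pt_const. intros u v; reflexivity.
    - apply Gc_cont_lin. }
  apply (continuity_pt_minus (fun l => (fst (Pt n 0) - Gc (cx n) (INR n * l)) * (fst (Pt n 0) - Gc (cx n) (INR n * l)) +
   (snd (Pt n 0) - Gc (sy n) (INR n * l)) * (snd (Pt n 0) - Gc (sy n) (INR n * l))) (fun _ => r * r)).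
  2:{ apply continuity_pt_const. intros u v; reflexivity. }
  apply (continuity_pt_plus (fun l => (fst (Pt n 0) - Gc (cx n) (INR n * l)) * (fst (Pt n 0) - Gc (cx n) (INR n * l)))
     (fun l => (snd (Pt n 0) - Gc (sy n) (INR n * l)) * (snd (Pt n 0) - Gc (sy n) (INR n * l)))).
  - apply (continuity_pt_mult (fun l => fst (Pt n 0) - Gc (cx n) (INR n * l)) (fun l => fst (Pt n 0) - Gc (cx n) (INR n * l))); apply HA.
  - apply (continuity_pt_mult (fun l => snd (Pt n 0) - Gc (sy n) (INR n * l)) (fun l => snd (Pt n 0) - Gc (sy n) (INR n * l))); apply HA.
Qed.

Lemma phi_eq n r l : (fst (Pt n 0) - Gc (cx n) (INR n * l)) * (fst (Pt n 0) - Gc (cx n) (INR n * l)) +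
   (snd (Pt n 0) - Gc (sy n) (INR n * l)) * (snd (Pt n 0) - Gc (sy n) (INR n * l)) - r * r
   = chord0 n (INR n * l) - r^2.
Proof. unfold chord0, D2. simpl. ring. Qed.

Lemma frac_eq y m : IZR m <= y < IZR m + 1 -> frac y = y - IZR m.
Proof. intros H. unfold frac. rewrite (Int_part_eq y m H). reflexivity. Qed.

Lemma frac_bnd y : 0 <= frac y < 1.
Proof. unfold frac. pose proof (Int_part_bnd y). lra. Qed.

Theorem lemma5p4 (n : nat) (r : R) (k : nat) (p gv gp : R) :
  (3 <= n)%nat ->
  0 < r -> Rbar_lt (Finite r) (r_crit n) ->
  (k < n)%nat ->
  in_P p ->
  is_g n r (INR k / INR n) gv ->
  is_g n r p gp ->
  dP (INR k / INR n) gv <= dP p gp.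
Proof.
  intros Hn3 Hr _ Hk Hp [Hgv_in [Hgv_d Hgv_min]] [Hgp_in [Hgp_d Hgp_min]].
  assert (Hn : 0 < INR n) by (apply lt_0_INR; lia).
  assert (HkN : INR k < INR n) by (apply lt_INR; lia).
  assert (Hk0 : 0 <= INR k) by apply pos_INR.
  set (v := INR k / INR n). change (INR k / INR n) with v in Hgv_min.
  assert (Hv : 0 <= v < 1).
  { unfold v; split. apply Rdiv_le_0_compat; lra. apply (Rmult_lt_reg_r (INR n)); [lra|].
    unfold Rdiv; rewrite Rmult_assoc, Rinv_l by lra; lra. }
  set (L := dP p gp).
  pose proof (frac_bnd (gv - v)) as HLv.
  pose proof (frac_bnd (gp - p)) as HL.
  change (frac (gv - v)) with (dP v gv) in HLv.
  change (frac (gp - p)) with L in HL.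
  destruct (Rle_or_lt (dP v gv) L) as [H|H]; [exact H| exfalso].
  assert (Hkey : chord0 n (INR n * L) < r^2).
  { destruct (Rlt_or_le (chord0 n (INR n * L)) (r^2)) as [Hc|Hc]; [exact Hc| exfalso].
    assert (Hz : exists z, 0 <= z <= L /\ chord0 n (INR n * z) = r^2).
    { destruct (Req_dec (chord0 n (INR n * L)) (r^2)) as [He|Hne].
      - exists L. split; [lra|exact He].
      - assert (H00 : chord0 n (INR n * 0) = 0) by (rewrite Rmult_0_r; unfold chord0, D2; ring).
        assert (HL0 : 0 < L).
        { destruct (Req_dec L 0) as [E|E]; [|lra]. rewrite E, H00 in Hc. nra. }
        destruct (IVT _ 0 L (phi_cont n r) HL0) as [z [Hz1 Hz2]].
        + rewrite phi_eq, H00. nra.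
        + rewrite phi_eq. lra.
        + exists z. split; [exact Hz1|]. rewrite phi_eq in Hz2. lra. }
    destruct Hz as [z [Hz1 Hz2]].
    assert (Hnv : INR n * v = IZR (Z.of_nat k)) by (unfold v; rewrite <- INR_IZR_INZ; field; lra).
    destruct (Rlt_or_le (v + z) 1) as [Hvz|Hvz].
    - assert (Hin : in_P (v + z)) by (unfold in_P; lra).
      assert (Hd : pdist n v (v + z) = r).
      { rewrite pdist_D2, Hnv.
        replace (INR n * (v+z)) with (IZR (Z.of_nat k) + INR n * z) by (rewrite <- Hnv; ring).
        rewrite F1 by (try assumption; lia). rewrite Hz2. apply sqrt_pow2; lra. }
      pose proof (Hgv_min _ Hin Hd) as Hm.
      unfold dP at 2 in Hm. replace (v + z - v) with z in Hm by ring.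
      rewrite (frac_eq _ 0) in Hm by (simpl; split; lra). lra.
    - assert (Hin : in_P (v + z - 1)) by (unfold in_P; lra).
      assert (Hd : pdist n v (v + z - 1) = r).
      { rewrite pdist_D2, Hnv.
        replace (INR n * (v+z-1)) with (IZR (Z.of_nat k) + INR n * z - INR n) by (rewrite <- Hnv; ring).
        rewrite <- (Pt_per n Hn (IZR (Z.of_nat k) + INR n * z - INR n)).
        replace (IZR (Z.of_nat k) + INR n * z - INR n + INR n) with (IZR (Z.of_nat k) + INR n * z) by ring.
        rewrite F1 by (try assumption; lia). rewrite Hz2. apply sqrt_pow2; lra. }
      pose proof (Hgv_min _ Hin Hd) as Hm.
      unfold dP at 2 in Hm. replace (v + z - 1 - v) with (z - 1) in Hm by ring.
      rewrite (frac_eq _ (-1)) in Hm by (simpl; split; lra). lra. }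
  unfold in_P in *.
  set (x := INR n * p).
  set (y := x + INR n * L).
  assert (HD : D2 (Pt n x) (Pt n y) = r^2).
  { assert (Hy : Pt n y = Pt n (INR n * gp)).
    { unfold y, L, dP. destruct (Rle_or_lt 0 (gp - p)) as [Hs|Hs].
      - rewrite (frac_eq _ 0) by (simpl; split; lra). unfold x. f_equal. ring.
      - rewrite (frac_eq _ (-1)) by (simpl; split; lra). rewrite <- (Pt_per n Hn (INR n * gp)). unfold x. f_equal. ring. }
    rewrite Hy. rewrite <- Hgp_d, pdist_D2. rewrite pow2_sqrt; [reflexivity|]. unfold D2.
    apply Rplus_le_le_0_compat; apply pow2_ge_0. }
  assert (Hx0 : 0 <= x) by (unfold x; nra).
  assert (HnL : 0 <= INR n * L) by nra.
  remember (Int_part x) as i eqn:Hi. remember (Int_part y) as j eqn:Hj.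
  pose proof (Int_part_bnd x) as Hbx. pose proof (Int_part_bnd y) as Hby.
  rewrite <- Hi in Hbx. rewrite <- Hj in Hby.
  assert (Hi0 : (0 <= i)%Z) by (assert (-1 < i)%Z by (apply lt_IZR; lra); lia).
  assert (Hj0 : (0 <= j)%Z) by (assert (-1 < j)%Z by (apply lt_IZR; unfold y in *; lra); lia).
  unfold D2, Pt in HD. cbn [fst snd] in HD.
  rewrite (Gc_form (cx n) x i (eq_sym Hi)), (Gc_form (sy n) x i (eq_sym Hi)),
    (Gc_form (cx n) y j (eq_sym Hj)), (Gc_form (sy n) y j (eq_sym Hj)) in HD.
  set (s := x - IZR i) in *. set (t := y - IZR j) in *.
  assert (Hs : 0 <= s < 1) by (unfold s; lra).
  assert (Ht : 0 <= t < 1) by (unfold t; lra).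
  set (a0 := cx n i) in *. set (a1 := cx n (i+1)) in *.
  set (b0 := cx n j) in *. set (b1 := cx n (j+1)) in *.
  set (c0 := sy n i) in *. set (c1 := sy n (i+1)) in *.
  set (e0 := sy n j) in *. set (e1 := sy n (j+1)) in *.
  destruct (Rle_or_lt s t) as [Hst|Hst].
  - set (d := t - s).
    assert (EA : D2 (Pt n (IZR i + 0)) (Pt n (IZR j + d)) < r^2).
    { replace (IZR i + 0) with (IZR i) by ring.
      replace (IZR j + d) with (IZR i + INR n * L) by (unfold d, t, s, y; ring).
      rewrite F1 by (try assumption; lia). exact Hkey. }
    assert (EB : D2 (Pt n (IZR i + (1 - d))) (Pt n (IZR j + 1)) < r^2).
    { replace (IZR i + (1 - d)) with (IZR (j+1) - INR n * L) by (rewrite plus_IZR; unfold d, t, s, y; ring).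
      replace (IZR j + 1) with (IZR (j+1)) by (rewrite plus_IZR; ring).
      rewrite F2 by (try assumption; lia). exact Hkey. }
    unfold D2, Pt in EA, EB. cbn [fst snd] in EA, EB.
    rewrite !Gc_at in EA by (unfold d; lra). rewrite !Gc_at in EB by (unfold d; lra).
    fold a0 a1 b0 b1 c0 c1 e0 e1 in EA, EB.
    set (X0 := (1 - 0) * a0 + 0 * a1 - ((1 - d) * b0 + d * b1)) in EA.
    set (Y0 := (1 - 0) * c0 + 0 * c1 - ((1 - d) * e0 + d * e1)) in EA.
    set (X1 := (1 - (1 - d)) * a0 + (1 - d) * a1 - ((1 - 1) * b0 + 1 * b1)) in EB.
    set (Y1 := (1 - (1 - d)) * c0 + (1 - d) * c1 - ((1 - 1) * e0 + 1 * e1)) in EB.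
    set (l := s / (1 - d)).
    assert (Hd1 : 0 < 1 - d) by (unfold d; lra).
    assert (Hl : 0 <= l <= 1).
    { unfold l; split. apply Rdiv_le_0_compat; lra.
      apply (Rmult_le_reg_r (1 - d)); [lra|]. unfold Rdiv; rewrite Rmult_assoc, Rinv_l by lra. unfold d; lra. }
    pose proof (conv l X0 Y0 X1 Y1 (r^2) Hl EA EB) as Hc.
    assert (E1 : (1 - s) * a0 + s * a1 - ((1 - t) * b0 + t * b1) = (1-l)*X0 + l*X1)
      by (unfold l, X0, X1, d; field; unfold d in Hd1; lra).
    assert (E2 : (1 - s) * c0 + s * c1 - ((1 - t) * e0 + t * e1) = (1-l)*Y0 + l*Y1)
      by (unfold l, Y0, Y1, d; field; unfold d in Hd1; lra).
    rewrite E1, E2 in HD. lra.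
  - set (d := t - s).
    assert (EA : D2 (Pt n (IZR i + (-d))) (Pt n (IZR j + 0)) < r^2).
    { replace (IZR i + (-d)) with (IZR j - INR n * L) by (unfold d, t, s, y; ring).
      replace (IZR j + 0) with (IZR j) by ring.
      rewrite F2 by (try assumption; lia). exact Hkey. }
    assert (EB : D2 (Pt n (IZR i + 1)) (Pt n (IZR j + (1 + d))) < r^2).
    { replace (IZR i + 1) with (IZR (i+1)) by (rewrite plus_IZR; ring).
      replace (IZR j + (1 + d)) with (IZR (i+1) + INR n * L) by (rewrite plus_IZR; unfold d, t, s, y; ring).
      rewrite F1 by (try assumption; lia). exact Hkey. }
    unfold D2, Pt in EA, EB. cbn [fst snd] in EA, EB.
    rewrite !Gc_at in EA by (unfold d; lra). rewrite !Gc_at in EB by (unfold d; lra).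
    fold a0 a1 b0 b1 c0 c1 e0 e1 in EA, EB.
    set (X0 := (1 - - d) * a0 + - d * a1 - ((1 - 0) * b0 + 0 * b1)) in EA.
    set (Y0 := (1 - - d) * c0 + - d * c1 - ((1 - 0) * e0 + 0 * e1)) in EA.
    set (X1 := (1 - 1) * a0 + 1 * a1 - ((1 - (1 + d)) * b0 + (1 + d) * b1)) in EB.
    set (Y1 := (1 - 1) * c0 + 1 * c1 - ((1 - (1 + d)) * e0 + (1 + d) * e1)) in EB.
    set (l := t / (1 + d)).
    assert (Hd1 : 0 < 1 + d) by (unfold d; lra).
    assert (Hl : 0 <= l <= 1).
    { unfold l; split. apply Rdiv_le_0_compat; lra.
      apply (Rmult_le_reg_r (1 + d)); [lra|]. unfold Rdiv; rewrite Rmult_assoc, Rinv_l by lra. unfold d; lra. }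
    pose proof (conv l X0 Y0 X1 Y1 (r^2) Hl EA EB) as Hc.
    assert (E1 : (1 - s) * a0 + s * a1 - ((1 - t) * b0 + t * b1) = (1-l)*X0 + l*X1)
      by (unfold l, X0, X1, d; field; unfold d in Hd1; lra).
    assert (E2 : (1 - s) * c0 + s * c1 - ((1 - t) * e0 + t * e1) = (1-l)*Y0 + l*Y1)
      by (unfold l, Y0, Y1, d; field; unfold d in Hd1; lra).
    rewrite E1, E2 in HD. lra.
Qed.
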